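(* Let $n\ge2$, $\lambda>0$, and $\rho=(\rho_1,\dots,\rho_n)^\top\in(0,1)^n$ with $\sum_{j=1}^n\rho_j=1$. Let $\mathbf{A}=\rho\otimes(1,\dots,1)-\mathbf{I}\in\mathbb{R}^{n\times n}$ and consider $\frac{\mathrm{d}}{\mathrm{d}t}f=2\lambda\mathbf{A}f$, $f(0)=f^I\in\mathbb{R}^n$, with steady state $f^\infty=\rho$. Let $\psi\in C^2(J)$ be a convex entropy generator such that, for some $\mu>0$ and all $u=(u_1,\dots,u_n)^\top\in[0,1]^n$ with $\sum_j u_j=1$, $$\sum_{j=1}^n\psi''\Big(\frac{u_j}{\rho_j}\Big)\frac{1}{\rho_j}(\rho_j-u_j)^2\ \ge\ \frac{\mu}{2\lambda}\sum_{j=1}^n\psi'\Big(\frac{u_j}{\rho_j}\Big)(u_j-\rho_j).$$ Then for all non-negative normalized initial data $f^I$ (i.e. $f^I_j\ge0$, $\sum_jf^I_j=1$) the solution satisfies $$I_\psi(f(t)|f^\infty)\le e^{-(2\lambda+\mu)t}I_\psi(f^I|f^\infty),\qquad e_\psi(f(t)|f^\infty)\le e^{-(2\lambda+\mu)t}e_\psi(f^I|f^\infty),\qquad t\ge0.$$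
   Context: $J$ is $\mathbb{R}^+$ or $\mathbb{R}$. An entropy generator is a function $\psi\in C(\bar J)\cap C^2(J)$ with $\psi(1)=0$, $\psi\ge0$, $\psi''\ge0$ on $J$. The relative entropy is $e_\psi(f|f^\infty)=\sum_{j=1}^n\psi(f_j/f^\infty_j)f^\infty_j$ and the Fisher information is $I_\psi(f|f^\infty)=\sum_{j=1}^n\psi'(f_j/f^\infty_j)\,2\lambda\,(f_j-f^\infty_j)$ (so that $\frac{\mathrm{d}}{\mathrm{d}t}e_\psi(f(t)|f^\infty)=-I_\psi(f(t)|f^\infty)$). *)

(* Defs.v *)
From Stdlib Require Import Reals Lra.
From Coquelicot Require Import Coquelicot.
Open Scope R_scope.

(* Finite sum  F 0 + ... + F (n-1). Vectors in R^n are functions nat -> R,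
   only the indices j < n matter. *)
Fixpoint rsum (n : nat) (F : nat -> R) : R :=
  match n with
  | O => 0
  | S k => rsum k F + F k
  end.

(* The interval J: Jpos = true means J = R^+ = (0,+oo), Jpos = false means J = R. *)
Definition inJ (Jpos : bool) (x : R) : Prop := if Jpos then 0 < x else True.
Definition inJbar (Jpos : bool) (x : R) : Prop := if Jpos then 0 <= x else True.

(* psi' and psi'' (Coquelicot's total derivative; meaningful on J). *)
Definition psi_d1 (psi : R -> R) : R -> R := Derive psi.
Definition psi_d2 (psi : R -> R) : R -> R := Derive (Derive psi).

Definition entropy_generator (Jpos : bool) (psi : R -> R) : Prop :=
  (forall x, inJbar Jpos x ->
     filterlim psi (within (inJbar Jpos) (locally x)) (locally (psi x))) /\
  (forall x, inJ Jpos x ->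
     ex_derive psi x /\ ex_derive (Derive psi) x /\
     continuous (Derive (Derive psi)) x) /\
  psi 1 = 0 /\
  (forall x, inJbar Jpos x -> 0 <= psi x) /\
  (forall x, inJ Jpos x -> 0 <= psi_d2 psi x).

Definition e_psi (n : nat) (psi : R -> R) (f finf : nat -> R) : R :=
  rsum n (fun j => psi (f j / finf j) * finf j).

Definition I_psi (n : nat) (lam : R) (psi : R -> R) (f finf : nat -> R) : R :=
  rsum n (fun j => psi_d1 psi (f j / finf j) * (2 * lam) * (f j - finf j)).

(* (A f)_i for A = rho (x) (1,...,1) - I. *)
Definition Amul (n : nat) (rho f : nat -> R) (i : nat) : R :=
  rho i * rsum n f - f i.

(* Main.v *)
Require Import Defs.
From Stdlib Require Import Reals Lra Lia.
From Coquelicot Require Import Coquelicot.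
Open Scope R_scope.

Lemma rsum_ext n F G : (forall j, (j < n)%nat -> F j = G j) -> rsum n F = rsum n G.
Proof. induction n; simpl; intros H; auto. rewrite IHn by (intros; apply H; lia). rewrite H by lia; auto. Qed.
Lemma rsum_plus n F G : rsum n (fun j => F j + G j) = rsum n F + rsum n G.
Proof. induction n; simpl; [lra| rewrite IHn; lra]. Qed.
Lemma rsum_scal n c F : rsum n (fun j => c * F j) = c * rsum n F.
Proof. induction n; simpl; [lra| rewrite IHn; lra]. Qed.
Lemma rsum_le n F G : (forall j, (j < n)%nat -> F j <= G j) -> rsum n F <= rsum n G.
Proof. induction n; simpl; intros H; [lra|]. pose proof (H n ltac:(lia)). pose proof (IHn ltac:(intros; apply H; lia)). lra. Qed.
Lemma rsum_term_le n F : (forall j, (j < n)%nat -> 0 <= F j) -> forall j, (j < n)%nat -> F j <= rsum n F.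
Proof. induction n; simpl; intros H j Hj; [lia|].
  assert (0 <= rsum n F). { replace 0 with (rsum n (fun _ => 0)). apply rsum_le; intros; apply H; lia. clear; induction n; simpl; lra. }
  destruct (Nat.eq_dec j n). subst. lra. pose proof (IHn ltac:(intros; apply H; lia) j ltac:(lia)). pose proof (H n ltac:(lia)). lra. Qed.

Lemma der_const (c x:R) : is_derive (fun _ : R => c) x 0.
Proof. auto_derive; auto. Qed.
Lemma der_plus (f g : R -> R) (x a b : R) : is_derive f x a -> is_derive g x b -> is_derive (fun t => f t + g t) x (a + b).
Proof. intros. apply (is_derive_plus f g x a b); auto. Qed.
Lemma der_mult (f g : R -> R) (x a b : R) : is_derive f x a -> is_derive g x b -> is_derive (fun t => f t * g t) x (a * g x + f x * b).
Proof. intros. apply (is_derive_mult f g x a b); auto. intros; apply Rmult_comm. Qed.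
Lemma der_comp (f g : R -> R) (x a b : R) : is_derive f (g x) a -> is_derive g x b -> is_derive (fun t => f (g t)) x (a * b).
Proof. intros. pose proof (is_derive_comp f g x a b H H0). unfold scal in H1; simpl in H1; unfold mult in H1; simpl in H1.
  replace (a*b) with (b*a) by ring. auto. Qed.
Lemma der_eq (f : R -> R) (x l l' : R) : is_derive f x l -> l = l' -> is_derive f x l'.
Proof. intros; subst; auto. Qed.
Lemma der_rsum n (F : nat -> R -> R) (dF : nat -> R) (x : R) : (forall j, (j < n)%nat -> is_derive (F j) x (dF j)) ->
  is_derive (fun t => rsum n (fun j => F j t)) x (rsum n dF).
Proof. induction n; simpl; intros H.
  - apply der_const.
  - apply der_plus. apply IHn; intros; apply H; lia. apply H; lia. Qed.
Lemma der_cont (f : R -> R) (x l : R) : is_derive f x l -> continuity_pt f x.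
Proof. intros H. apply continuity_pt_filterlim. apply (ex_derive_continuous f x). exists l; auto. Qed.

Lemma nonincr (f df : R -> R) (a b : R) : a <= b ->
  (forall x, a < x < b -> is_derive f x (df x)) ->
  (forall x, a < x < b -> df x <= 0) ->
  (forall x, a <= x <= b -> continuity_pt f x) -> f b <= f a.
Proof. intros Hab Hd Hn Hc. destruct (Req_dec a b). subst; lra.
  assert (pr1 : forall c, a < c < b -> derivable_pt f c).
  { intros c Hc'. exists (df c). apply is_derive_Reals. auto. }
  assert (pr2 : forall c, a < c < b -> derivable_pt id c).
  { intros c _. apply derivable_pt_id. }
  destruct (MVT f id a b pr1 pr2 ltac:(lra) Hc (fun c _ => derivable_continuous_pt _ _ (derivable_pt_id c))) as [c [P HP]].
  assert (derive_pt id c (pr2 c P) = 1) by (apply derive_pt_eq_0; apply derivable_pt_lim_id).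
  rewrite H0 in HP. unfold id in HP.
  assert (derive_pt f c (pr1 c P) = df c).
  { apply derive_pt_eq_0. apply is_derive_Reals. auto. }
  rewrite H1 in HP. pose proof (Hn c P). nra. Qed.

Lemma const_der (F : R -> R) : (forall t, is_derive F t 0) -> forall t, F t = F 0.
Proof. intros H t. destruct (MVT_gen F 0 t (fun _ => 0)) as [c [_ Hc]].
  intros; auto. intros; eapply der_cont; eauto. lra. Qed.

Lemma ode_sol n lam rho fI (f : R -> nat -> R) : rsum n rho = 1 -> rsum n fI = 1 ->
  (forall j, (j < n)%nat -> f 0 j = fI j) ->
  (forall j t, (j < n)%nat -> is_derive (fun s => f s j) t (2 * lam * Amul n rho (f t) j)) ->
  forall t j, (j < n)%nat -> f t j = rho j + exp (- (2 * lam) * t) * (fI j - rho j).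
Proof.
  intros Hr HfI H0 Hd.
  assert (HS : forall t, rsum n (f t) = 1).
  { assert (D : forall t, is_derive (fun s => rsum n (fun j => f s j)) t 0).
    { intros t. eapply der_eq. apply der_rsum with (dF := fun j => 2*lam*Amul n rho (f t) j).
      intros; apply Hd; auto. unfold Amul.
      rewrite (rsum_ext n _ (fun j => (2*lam*rsum n (f t)) * rho j + (-(2*lam)) * f t j)) by (intros; ring).
      rewrite rsum_plus, !rsum_scal, Hr. ring. }
    intros t. pose proof (const_der _ D t) as E. simpl in E. change (rsum n (f t) = 1).
    transitivity (rsum n (fun j => f t j)). reflexivity. rewrite E.
    rewrite (rsum_ext n _ fI) by auto. auto. }
  intros t j Hj.
  assert (D : forall t, is_derive (fun s => exp (2*lam*s) * (f s j - rho j)) t 0).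
  { intros s. eapply der_eq. apply (der_mult _ _ s (exp (2*lam*s) * (2*lam)) (2 * lam * Amul n rho (f s) j)).
    - apply (der_comp exp (fun s => 2*lam*s)). apply is_derive_exp.
      auto_derive; auto. apply Rmult_1_r.
    - apply (is_derive_ext (fun s => f s j + - rho j)). intros; reflexivity.
      eapply der_eq. apply der_plus. apply Hd; auto. apply der_const. ring.
    - unfold Amul. rewrite HS. ring. }
  pose proof (const_der _ D t) as E. simpl in E. rewrite Rmult_0_r, exp_0, Rmult_1_l, H0 in E by auto.
  assert (exp (- (2 * lam) * t) * exp (2*lam*t) = 1).
  { rewrite <- exp_plus. replace (- (2 * lam) * t + 2 * lam * t) with 0 by ring. apply exp_0. }
  rewrite <- E. replace (f t j) with (rho j + (exp (- (2 * lam) * t) * exp (2*lam*t)) * (f t j - rho j)) at 1 by (rewrite H; ring).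
  ring.
Qed.

Definition dv (fI rho : nat -> R) j := fI j / rho j - 1.
Definition yv (fI rho : nat -> R) j r := 1 + r * dv fI rho j.
Definition Ef n psi fI rho r := rsum n (fun j => psi (yv fI rho j r) * rho j).
Definition Pf n psi fI rho r := rsum n (fun j => psi_d1 psi (yv fI rho j r) * rho j * dv fI rho j).
Definition Ph n psi fI rho r := rsum n (fun j => psi_d1 psi (yv fI rho j r) * rho j * (r * dv fI rho j)).
Definition Q2 n psi fI rho r := rsum n (fun j => psi_d2 psi (yv fI rho j r) * rho j * (r * dv fI rho j) ^ 2).
Definition Dph n psi fI rho r := rsum n (fun j => psi_d2 psi (yv fI rho j r) * dv fI rho j * (rho j * (r * dv fI rho j))
   + psi_d1 psi (yv fI rho j r) * (rho j * dv fI rho j)).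

Lemma dy fI rho j r : is_derive (fun r => yv fI rho j r) r (dv fI rho j).
Proof. unfold yv. auto_derive; auto. ring. Qed.

Lemma dE Jpos psi n fI rho r : entropy_generator Jpos psi ->
  (forall j, (j < n)%nat -> inJ Jpos (yv fI rho j r)) ->
  is_derive (Ef n psi fI rho) r (Pf n psi fI rho r).
Proof.
  intros [_ [Hd _]] HJ. unfold Ef, Pf.
  apply (der_rsum n (fun j t => psi (yv fI rho j t) * rho j)). intros j Hj.
  destruct (Hd _ (HJ j Hj)) as [e1 _].
  eapply der_eq. apply (der_mult _ _ r (Derive psi (yv fI rho j r) * dv fI rho j) 0).
  apply (der_comp psi (fun t => yv fI rho j t)). apply Derive_correct; auto. apply dy.
  apply der_const. cbv beta. unfold psi_d1. ring.
Qed.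

Lemma dPh Jpos psi n fI rho r : entropy_generator Jpos psi ->
  (forall j, (j < n)%nat -> inJ Jpos (yv fI rho j r)) ->
  is_derive (Ph n psi fI rho) r (Dph n psi fI rho r).
Proof.
  intros [_ [Hd _]] HJ. unfold Ph, Dph.
  apply (der_rsum n (fun j t => psi_d1 psi (yv fI rho j t) * rho j * (t * dv fI rho j))). intros j Hj.
  destruct (Hd _ (HJ j Hj)) as [e1 [e2 _]].
  eapply der_eq. apply (der_mult _ _ r (Derive (Derive psi) (yv fI rho j r) * dv fI rho j * rho j) (dv fI rho j)).
  eapply der_eq. apply (der_mult _ _ r (Derive (Derive psi) (yv fI rho j r) * dv fI rho j) 0).
  apply (der_comp (Derive psi) (fun t => yv fI rho j t)). apply Derive_correct; auto. apply dy.
  apply der_const. cbv beta. unfold psi_d1. ring.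
  auto_derive; auto. ring.
  cbv beta. unfold psi_d1, psi_d2. ring.
Qed.

Lemma rDph n psi fI rho r : r * Dph n psi fI rho r = Q2 n psi fI rho r + Ph n psi fI rho r.
Proof. unfold Dph, Q2, Ph. rewrite <- rsum_scal, <- rsum_plus. apply rsum_ext; intros. ring. Qed.

Lemma rPf n psi fI rho r : r * Pf n psi fI rho r = Ph n psi fI rho r.
Proof. unfold Pf, Ph. rewrite <- rsum_scal. apply rsum_ext; intros. ring. Qed.

Lemma rho_y fI rho j r : 0 < rho j -> rho j * yv fI rho j r = (1 - r) * rho j + r * fI j.
Proof. intros. unfold yv, dv. field. lra. Qed.

Lemma yv_J Jpos fI rho j r : 0 <= fI j -> 0 < rho j -> 0 <= r < 1 -> inJ Jpos (yv fI rho j r).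
Proof. intros. unfold inJ. destruct Jpos; auto.
  assert (0 < rho j * yv fI rho j r). { rewrite rho_y by auto. nra. }
  apply (Rmult_lt_reg_l (rho j)); lra. Qed.

Lemma yv_Jbar Jpos fI rho j r : 0 <= fI j -> 0 < rho j -> 0 <= r <= 1 -> inJbar Jpos (yv fI rho j r).
Proof. intros. unfold inJbar. destruct Jpos; auto.
  assert (0 <= rho j * yv fI rho j r). { rewrite rho_y by auto. nra. }
  apply (Rmult_le_reg_l (rho j)); lra. Qed.

Lemma hypQ n lam rho Jpos psi mu fI r :
  (forall j, (j < n)%nat -> 0 < rho j < 1) ->
  rsum n rho = 1 ->
  (forall u : nat -> R,
     (forall j, (j < n)%nat -> 0 <= u j <= 1) ->
     rsum n u = 1 ->
     (forall j, (j < n)%nat -> inJ Jpos (u j / rho j)) ->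
     rsum n (fun j => psi_d2 psi (u j / rho j) * / rho j * (rho j - u j) ^ 2)
       >= mu / (2 * lam) * rsum n (fun j => psi_d1 psi (u j / rho j) * (u j - rho j))) ->
  (forall j, (j < n)%nat -> 0 <= fI j) ->
  rsum n fI = 1 ->
  0 < r <= 1 ->
  (forall j, (j < n)%nat -> inJ Jpos (yv fI rho j r)) ->
  Q2 n psi fI rho r >= mu / (2 * lam) * Ph n psi fI rho r.
Proof.
  intros Hrho Hr Hmu HfI HfI1 Hr01 HJ.
  assert (E : forall j, (j < n)%nat -> rho j * yv fI rho j r / rho j = yv fI rho j r).
  { intros j Hj. pose proof (Hrho j Hj). field. lra. }
  specialize (Hmu (fun j => rho j * yv fI rho j r)).
  assert (Hle : forall j, (j < n)%nat -> fI j <= 1).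
  { intros j Hj. rewrite <- HfI1. apply (rsum_term_le n fI HfI j Hj). }
  unfold Q2, Ph.
  rewrite (rsum_ext n _ (fun j => psi_d2 psi (rho j * yv fI rho j r / rho j) * / rho j * (rho j - rho j * yv fI rho j r) ^ 2)).
  rewrite (rsum_ext n (fun j => psi_d1 psi (yv fI rho j r) * rho j * (r * dv fI rho j)) (fun j => psi_d1 psi (rho j * yv fI rho j r / rho j) * (rho j * yv fI rho j r - rho j))).
  apply Hmu.
  - intros j Hj. rewrite rho_y by (apply Hrho; auto). pose proof (Hrho j Hj). pose proof (HfI j Hj). pose proof (Hle j Hj). nra.
  - rewrite (rsum_ext n _ (fun j => (1 - r) * rho j + r * fI j)). rewrite rsum_plus, !rsum_scal, Hr, HfI1. ring.
    intros j Hj. apply rho_y, Hrho; auto.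
  - intros j Hj. rewrite E; auto.
  - intros j Hj. rewrite E by auto. pose proof (Hrho j Hj). unfold yv. ring.
  - intros j Hj. rewrite E by auto. pose proof (Hrho j Hj). unfold yv. field. lra.
Qed.

Lemma cont_rsum n (F : nat -> R -> R) x : (forall j, (j < n)%nat -> continuity_pt (F j) x) ->
  continuity_pt (fun t => rsum n (fun j => F j t)) x.
Proof. induction n; simpl; intros H.
  - apply continuity_pt_const. intros a b; auto.
  - apply (continuity_pt_plus (fun t => rsum n (fun j => F j t)) (F n)). apply IHn; intros; apply H; lia. apply H; lia. Qed.

Lemma cont_mult (f g : R -> R) x : continuity_pt f x -> continuity_pt g x -> continuity_pt (fun t => f t * g t) x.
Proof. intros; apply (continuity_pt_mult f g x); auto. Qed.
Lemma cont_plus (f g : R -> R) x : continuity_pt f x -> continuity_pt g x -> continuity_pt (fun t => f t + g t) x.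
Proof. intros; apply (continuity_pt_plus f g x); auto. Qed.
Lemma cont_const (c x : R) : continuity_pt (fun _ => c) x.
Proof. apply continuity_pt_const. intros a b; auto. Qed.
Lemma cont_comp (f g : R -> R) x : continuity_pt g x -> continuity_pt f (g x) -> continuity_pt (fun t => f (g t)) x.
Proof. intros; apply (continuity_pt_comp g f x); auto. Qed.

Lemma cont_psi Jpos psi (g : R -> R) a : entropy_generator Jpos psi -> continuity_pt g a ->
  (forall r, inJbar Jpos (g r)) -> continuity_pt (fun r => psi (g r)) a.
Proof.
  intros [Hc _] Hg HJ. apply continuity_pt_filterlim. apply continuity_pt_filterlim in Hg.
  intros P HP. specialize (Hc (g a) (HJ a) P HP). specialize (Hg _ Hc).
  unfold filtermap in *. eapply filter_imp; [|exact Hg]. simpl. intros x Hx. apply Hx, HJ.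
Qed.

Lemma exp_le1 a : a <= 0 -> exp a <= 1.
Proof. intros. destruct (Rlt_or_le a 0). rewrite <- exp_0. left. apply exp_increasing; auto.
  replace a with 0 by lra. rewrite exp_0; lra. Qed.

Theorem theorem4 (n : nat) (lam : R) (rho : nat -> R) (Jpos : bool)
  (psi : R -> R) (mu : R) (fI : nat -> R) (f : R -> nat -> R) :
  (2 <= n)%nat ->
  0 < lam ->
  (forall j, (j < n)%nat -> 0 < rho j < 1) ->
  rsum n rho = 1 ->
  entropy_generator Jpos psi ->
  0 < mu ->
  (forall u : nat -> R,
     (forall j, (j < n)%nat -> 0 <= u j <= 1) ->
     rsum n u = 1 ->
     (forall j, (j < n)%nat -> inJ Jpos (u j / rho j)) ->
     rsum n (fun j => psi_d2 psi (u j / rho j) * / rho j * (rho j - u j) ^ 2)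
       >= mu / (2 * lam) * rsum n (fun j => psi_d1 psi (u j / rho j) * (u j - rho j))) ->
  (forall j, (j < n)%nat -> 0 <= fI j) ->
  rsum n fI = 1 ->
  (forall j, (j < n)%nat -> f 0 j = fI j) ->
  (forall j t, (j < n)%nat ->
     is_derive (fun s => f s j) t (2 * lam * Amul n rho (f t) j)) ->
  forall t, 0 <= t ->
    ((forall j, (j < n)%nat -> inJ Jpos (fI j / rho j)) ->
       I_psi n lam psi (f t) rho <= exp (- (2 * lam + mu) * t) * I_psi n lam psi fI rho) /\
    e_psi n psi (f t) rho <= exp (- (2 * lam + mu) * t) * e_psi n psi fI rho.
Proof.
  intros Hn Hlam Hrho Hr EG Hmu0 Hmu HfI0 HfI1 Hf0 Hfd t Ht.
  pose proof (ode_sol n lam rho fI f Hr HfI1 Hf0 Hfd) as Hsol.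
  pose proof EG as [_ [Hdif [Hpsi1 _]]].
  assert (HI : forall x, I_psi n lam psi (f x) rho = 2*lam * Ph n psi fI rho (exp (-(2*lam)*x))).
  { intros x. unfold I_psi, Ph. rewrite <- rsum_scal. apply rsum_ext; intros j Hj.
    rewrite Hsol by auto. pose proof (Hrho j Hj).
    replace ((rho j + exp (- (2 * lam) * x) * (fI j - rho j)) / rho j) with (yv fI rho j (exp (- (2 * lam) * x)))
      by (unfold yv, dv; field; lra).
    unfold dv; field; lra. }
  assert (HE : forall x, e_psi n psi (f x) rho = Ef n psi fI rho (exp (-(2*lam)*x))).
  { intros x. unfold e_psi, Ef. apply rsum_ext; intros j Hj.
    rewrite Hsol by auto. pose proof (Hrho j Hj).
    replace ((rho j + exp (- (2 * lam) * x) * (fI j - rho j)) / rho j) with (yv fI rho j (exp (- (2 * lam) * x)))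
      by (unfold yv, dv; field; lra). reflexivity. }
  assert (Hy1 : forall j, yv fI rho j 1 = fI j / rho j) by (intros; unfold yv, dv; ring).
  assert (HI0 : I_psi n lam psi fI rho = 2*lam * Ph n psi fI rho 1).
  { unfold I_psi, Ph. rewrite <- rsum_scal. apply rsum_ext; intros j Hj. rewrite Hy1.
    pose proof (Hrho j Hj). unfold dv; field; lra. }
  assert (HE0 : e_psi n psi fI rho = Ef n psi fI rho 1).
  { unfold e_psi, Ef. apply rsum_ext; intros j Hj. rewrite Hy1. reflexivity. }
  assert (HS : forall x, 0 < x -> 0 < exp (-(2*lam)*x) < 1).
  { intros x Hx. split. apply exp_pos. rewrite <- exp_0. apply exp_increasing. nra. }
  assert (Hexp : forall x, exp (-(2*lam+mu)*x) * exp ((2*lam+mu)*x) = 1).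
  { intros. rewrite <- exp_plus. replace (-(2*lam+mu)*x + (2*lam+mu)*x) with 0 by ring. apply exp_0. }
  assert (Hkey : forall r, 0 < r <= 1 -> (forall j, (j < n)%nat -> inJ Jpos (yv fI rho j r)) ->
     (2*lam+mu) * Ph n psi fI rho r - 2*lam * (r * Dph n psi fI rho r) <= 0).
  { intros r Hr01 HJ. pose proof (hypQ n lam rho Jpos psi mu fI r Hrho Hr Hmu HfI0 HfI1 Hr01 HJ) as HQ.
    rewrite rDph.
    assert (mu / (2*lam) * Ph n psi fI rho r * (2*lam) = mu * Ph n psi fI rho r) by (field; lra).
    nra. }
  split.
  - intros HJ1.
    assert (Hyj : forall x, 0 <= x -> forall j, (j<n)%nat -> inJ Jpos (yv fI rho j (exp (-(2*lam)*x)))).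
    { intros x Hx j Hj. destruct (Req_dec x 0) as [->|Hx0].
      rewrite Rmult_0_r, exp_0, Hy1. auto.
      apply yv_J. apply HfI0; auto. apply Hrho; auto. pose proof (HS x ltac:(lra)); lra. }
    pose (K := fun x => exp ((2*lam+mu)*x) * (2*lam * Ph n psi fI rho (exp (-(2*lam)*x)))).
    pose (dK := fun x => (exp((2*lam+mu)*x)*(2*lam+mu)) * (2*lam*Ph n psi fI rho (exp (-(2*lam)*x)))
       + exp((2*lam+mu)*x) * (2*lam * (Dph n psi fI rho (exp(-(2*lam)*x)) * (exp(-(2*lam)*x) * (-(2*lam)))))).
    assert (Hd : forall x, 0 <= x -> is_derive K x (dK x)).
    { intros x Hx. unfold K, dK.
      apply (der_mult (fun x => exp ((2*lam+mu)*x)) (fun x => 2*lam * Ph n psi fI rho (exp (-(2*lam)*x))) x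
        (exp((2*lam+mu)*x)*(2*lam+mu)) (2*lam * (Dph n psi fI rho (exp(-(2*lam)*x)) * (exp(-(2*lam)*x) * (-(2*lam)))))).
      - apply (der_comp exp (fun x => (2*lam+mu)*x)). apply is_derive_exp. auto_derive; auto; lra.
      - apply is_derive_scal. apply (der_comp (Ph n psi fI rho) (fun x => exp (-(2*lam)*x))).
        apply (dPh Jpos); auto.
        apply (der_comp exp (fun x => -(2*lam)*x)). apply is_derive_exp. auto_derive; auto; lra. }
    assert (Hneg : forall x, 0 < x < t -> dK x <= 0).
    { intros x Hx. unfold dK. pose proof (HS x ltac:(lra)) as Hr1.
      pose proof (Hkey (exp (-(2*lam)*x)) ltac:(lra) (Hyj x ltac:(lra))) as Hk.
      assert (0 < exp((2*lam+mu)*x)*(2*lam)) by (apply Rmult_lt_0_compat; [apply exp_pos|lra]).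
      nra. }
    assert (Hc : forall x, 0<=x<=t -> continuity_pt K x) by (intros; eapply der_cont; apply Hd; lra).
    pose proof (nonincr K dK 0 t Ht (fun x Hx => Hd x ltac:(lra)) Hneg Hc) as HKt.
    unfold K in HKt. rewrite !Rmult_0_r, !exp_0, Rmult_1_l in HKt.
    rewrite HI, HI0.
    apply (Rmult_le_reg_l (exp((2*lam+mu)*t))). apply exp_pos.
    assert (E : forall X, exp((2*lam+mu)*t) * (exp(-(2*lam+mu)*t)*X) = X).
    { intros X. transitivity ((exp(-(2*lam+mu)*t)*exp((2*lam+mu)*t))*X). ring. rewrite Hexp; ring. }
    rewrite E. exact HKt.
  - assert (HJr : forall r, 0 <= r < 1 -> forall j, (j<n)%nat -> inJ Jpos (yv fI rho j r)).
    { intros r Hr' j Hj. apply yv_J; [apply HfI0|apply Hrho|]; auto. }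
    assert (HG : forall s, 0 < s < 1 -> (2*lam+mu) * Ef n psi fI rho s - 2*lam * Ph n psi fI rho s <= 0).
    { intros s Hs.
      pose (G := fun r => (2*lam+mu) * Ef n psi fI rho r + (-(2*lam)) * Ph n psi fI rho r).
      pose (dG := fun r => (2*lam+mu) * Pf n psi fI rho r + (-(2*lam)) * Dph n psi fI rho r).
      assert (HdG : forall r, 0 <= r < 1 -> is_derive G r (dG r)).
      { intros r Hr'. unfold G, dG. apply der_plus; apply is_derive_scal.
        apply (dE Jpos); auto. apply (dPh Jpos); auto. }
      assert (Hneg: forall r, 0 < r < s -> dG r <= 0).
      { intros r Hr'. pose proof (Hkey r ltac:(lra) (HJr r ltac:(lra))) as Hk.
        assert (r * dG r = (2*lam+mu)*Ph n psi fI rho r - 2*lam*(r*Dph n psi fI rho r))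
          by (unfold dG; rewrite <- rPf; ring).
        nra. }
      assert (Hc : forall r, 0 <= r <= s -> continuity_pt G r) by (intros; eapply der_cont; apply HdG; lra).
      pose proof (nonincr G dG 0 s ltac:(lra) (fun x Hx => HdG x ltac:(lra)) Hneg Hc) as HGs.
      assert (G 0 = 0).
      { unfold G, Ef, Ph.
        rewrite (rsum_ext n _ (fun j => 0 * rho j)). rewrite (rsum_ext n (fun j => psi_d1 psi (yv fI rho j 0) * rho j * (0 * dv fI rho j)) (fun j => 0 * rho j)).
        rewrite rsum_scal. ring.
        intros; ring. intros; unfold yv. rewrite Rmult_0_l, Rplus_0_r, Hpsi1. ring. }
      unfold G in HGs, H. lra. }
    pose (Sc := fun x => exp (-(2*lam) * ((x + Rabs x) * / 2))).
    assert (HSc : forall x, 0 <= x -> Sc x = exp (-(2*lam)*x)).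
    { intros x Hx. unfold Sc. rewrite Rabs_pos_eq by auto. f_equal; field. }
    assert (HSc01 : forall x, 0 <= Sc x <= 1).
    { intros x. unfold Sc. split. left; apply exp_pos. apply exp_le1. pose proof (Rle_abs (-x)) as Ha.
      rewrite Rabs_Ropp in Ha. nra. }
    pose (L := fun x => exp ((2*lam+mu)*x) * Ef n psi fI rho (Sc x)).
    pose (dL := fun x => (exp((2*lam+mu)*x)*(2*lam+mu)) * Ef n psi fI rho (exp (-(2*lam)*x))
       + exp((2*lam+mu)*x) * (Pf n psi fI rho (exp(-(2*lam)*x)) * (exp(-(2*lam)*x) * (-(2*lam))))).
    assert (HdL : forall x, 0 < x -> is_derive L x (dL x)).
    { intros x Hx. apply (is_derive_ext_loc (fun x => exp ((2*lam+mu)*x) * Ef n psi fI rho (exp (-(2*lam)*x)))).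
      { eapply filter_imp; [| exact (open_gt 0 x Hx)]. intros y Hy. unfold L. rewrite HSc by lra. reflexivity. }
      unfold dL. apply (der_mult (fun x => exp ((2*lam+mu)*x)) (fun x => Ef n psi fI rho (exp (-(2*lam)*x))) x
         (exp((2*lam+mu)*x)*(2*lam+mu)) (Pf n psi fI rho (exp(-(2*lam)*x)) * (exp(-(2*lam)*x) * (-(2*lam))))).
      { apply (der_comp exp (fun x => (2*lam+mu)*x)). apply is_derive_exp. auto_derive; auto; lra. }
      apply (der_comp (Ef n psi fI rho) (fun x => exp (-(2*lam)*x))).
      { apply (dE Jpos); [exact EG | intros j Hj; apply HJr; [pose proof (HS x Hx); lra | exact Hj]]. }
      apply (der_comp exp (fun x => -(2*lam)*x)). apply is_derive_exp. auto_derive; auto; lra. }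
    assert (HnegL : forall x, 0 < x < t -> dL x <= 0).
    { intros x Hx. pose proof (HS x ltac:(lra)) as Hr1. pose proof (HG _ Hr1) as Hg.
      pose proof (rPf n psi fI rho (exp(-(2*lam)*x))) as Hp.
      pose proof (exp_pos ((2*lam+mu)*x)).
      assert (dL x = exp((2*lam+mu)*x) * ((2*lam+mu) * Ef n psi fI rho (exp(-(2*lam)*x)) - 2*lam*Ph n psi fI rho (exp(-(2*lam)*x))))
        by (unfold dL; rewrite <- Hp; ring).
      rewrite H0. nra. }
    assert (HcL : forall x, 0 <= x <= t -> continuity_pt L x).
    { intros x Hx. unfold L. apply cont_mult.
      { apply (der_cont _ x (exp((2*lam+mu)*x) * (2*lam+mu))).
        apply (der_comp exp (fun x => (2*lam+mu)*x)). apply is_derive_exp. auto_derive; auto; lra. }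
      unfold Ef. apply (cont_rsum n (fun j x => psi (yv fI rho j (Sc x)) * rho j)). intros j Hj.
      apply cont_mult; [|apply cont_const].
      apply (cont_psi Jpos psi (fun x => yv fI rho j (Sc x))). exact EG.
      { unfold yv. apply cont_plus. apply cont_const. apply cont_mult; [|apply cont_const].
        unfold Sc. apply (cont_comp exp (fun x => -(2*lam) * ((x + Rabs x) * /2))).
        { apply cont_mult. apply cont_const. apply cont_mult; [|apply cont_const]. apply cont_plus.
          apply continuity_pt_id. apply Rcontinuity_abs. }
        eapply der_cont. apply is_derive_exp. }
      intros r. apply yv_Jbar. apply HfI0; auto. apply Hrho; auto. apply HSc01. }
    pose proof (nonincr L dL 0 t Ht (fun x Hx => HdL x ltac:(lra)) HnegL HcL) as HLt.
    unfold L in HLt. rewrite (HSc t Ht) in HLt.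
    assert (HS0 : Sc 0 = 1) by (rewrite HSc by lra; rewrite Rmult_0_r; apply exp_0).
    rewrite HS0, Rmult_0_r, exp_0, Rmult_1_l in HLt.
    rewrite HE, HE0. apply (Rmult_le_reg_l (exp((2*lam+mu)*t))). apply exp_pos.
    assert (E : forall X, exp((2*lam+mu)*t) * (exp(-(2*lam+mu)*t)*X) = X).
    { intros X. transitivity ((exp(-(2*lam+mu)*t)*exp((2*lam+mu)*t))*X). ring. rewrite Hexp; ring. }
    rewrite E. exact HLt.
Qed.
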